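(* The kernel of the Hopf algebra homomorphism $\varphi:\mathrm{WCQSym}\to\mathrm{QSym}$, defined by $\varphi(M_\alpha)=(-1)^{\ell_\varepsilon(\alpha)}M_{\bar\alpha}$ if $\alpha\in\mathcal C_N$ and $\varphi(M_\alpha)=0$ if $\alpha\in\mathcal C_\varepsilon$, is the ideal of $\mathrm{WCQSym}$ generated by the set $B_\varepsilon=\{M_\alpha:\alpha\in\mathcal C_\varepsilon\}$.
   Context: $\tilde{\mathbb N}=\mathbb N\cup\{\varepsilon\}$ with $0+\varepsilon=\varepsilon+\varepsilon=\varepsilon$ and $n+\varepsilon=n$ for integers $n\ge1$. $\mathbf{k}$ is a commutative ring containing $\mathbb Q$; $\mathbf{k}[[X]]_{\tilde{\mathbb N}}$, $X=\{x_1<x_2<\cdots\}$, is the algebra of possibly infinite linear combinations of formal monomials $\prod x_i^{f(x_i)}$ with $f$ finitely supported $\tilde{\mathbb N}$-valued, multiplied by adding exponents in $\tilde{\mathbb N}$. An $\tilde{\mathbb N}$-composition is a finite (possibly empty) sequence of elements of $\{\varepsilon,1,2,\dots\}$; $M_{(\alpha_1,\dots,\alpha_k)}=\sum_{1\le i_1<\cdots<i_k}x_{i_1}^{\alpha_1}\cdots x_{i_k}^{\alpha_k}$, $M_\emptyset=1$. $\mathrm{WCQSym}$ is the $\mathbf k$-span of all $M_\alpha$ (a Hopf algebra with deconcatenation coproduct $\Delta(M_{(\alpha_1,\dots,\alpha_k)})=\sum_{i=0}^kM_{(\alpha_1,\dots,\alpha_i)}\otimes M_{(\alpha_{i+1},\dots,\alpha_k)}$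 and counit $\epsilon(M_\alpha)=\delta_{\alpha,\emptyset}$), and $\mathrm{QSym}$ the Hopf subalgebra spanned by the $M_\alpha$ with all entries positive integers. $\ell_\varepsilon(\alpha)$ is the number of entries equal to $\varepsilon$, $\bar\alpha$ is $\alpha$ with its $\varepsilon$ entries deleted. $\mathcal C_\varepsilon$ is the set of $\tilde{\mathbb N}$-compositions with first entry $\varepsilon$, $\mathcal C_N$ the set of all others (including the empty one). *)

(* Defs.v *)
From HB Require Import structures.
From mathcomp Require Import all_boot all_order all_algebra.
Set Implicit Arguments. Unset Strict Implicit. Unset Printing Implicit Defensive.
Import GRing.Theory.
Local Open Scope ring_scope.

(* N~ = N u {eps}: None encodes eps, Some n encodes the integer n >= 0. *)
Definition ntilde := option nat.

Definition addnt (a b : ntilde) : ntilde :=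
  match a, b with
  | Some x, Some y => Some (x + y)%N
  | None, None => None
  | None, Some 0 => None
  | None, Some n => Some n
  | Some 0, None => None
  | Some n, None => Some n
  end.

Definition is_comp (al : seq ntilde) : bool := all (fun e => e != Some 0%N) al.

Definition in_Ceps (al : seq ntilde) : bool :=
  if al is e :: _ then e == None else false.

Definition leps (al : seq ntilde) : nat := count (pred1 None) al.
Definition bar (al : seq ntilde) : seq ntilde := filter (fun e => e != None) al.

(* Monomials prod_i x_{i+1}^{m_i} encoded as finite lists of exponents
   (m_0, m_1, ...) of x_1, x_2, ...; trailing zero exponents are irrelevant.
   Elements of k[[X]]_{N~} are coefficient functions on monomials. *)
Definition series (R : Type) := seq ntilde -> R.

Definition ntval (e : ntilde) : nat := if e is Some n then n else 0%N.
Definition cands (e : ntilde) : seq ntilde :=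
  None :: [seq Some i | i <- iota 0 (ntval e).+1].
Definition decomp_e (e : ntilde) : seq (ntilde * ntilde) :=
  [seq p <- [seq (a, b) | a <- cands e, b <- cands e] | addnt p.1 p.2 == e].

Fixpoint decomp (m : seq ntilde) : seq (seq ntilde * seq ntilde) :=
  if m is e :: m' then
    [seq (p.1 :: q.1, p.2 :: q.2) | p <- decomp_e e, q <- decomp m']
  else [:: ([::], [::])].

Definition mulser (R : comRingType) (F G : series R) : series R :=
  fun m => \sum_(p <- decomp m) F p.1 * G p.2.

(* the monomial quasisymmetric function M_alpha as a series: the coefficient
   of a monomial is 1 iff its nonzero exponents, read in variable order, form alpha *)
Definition Mser (R : comRingType) (al : seq ntilde) : series R :=
  fun m => if [seq e <- m | e != Some 0%N] == al then 1 else 0.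

Definition comb (R : Type) := seq (R * seq ntilde).
Definition is_comb (R : Type) (c : comb R) : bool := all (fun p => is_comp p.2) c.
Definition ser (R : comRingType) (c : comb R) : series R :=
  fun m => \sum_(p <- c) p.1 * Mser R p.2 m.

Definition phi (R : comRingType) (c : comb R) : comb R :=
  [seq (p.1 * (-1) ^+ leps p.2, bar p.2) | p <- c & ~~ in_Ceps p.2].

(* Main.v *)
Require Import Defs.
From HB Require Import structures.
From mathcomp Require Import all_boot all_order all_algebra.
From mathcomp Require Import ring.
From Stdlib Require Import FunctionalExtensionality.
Import GRing.Theory.
Local Open Scope ring_scope.
Set Implicit Arguments. Unset Strict Implicit. Unset Printing Implicit Defensive.

Notation S0 := (Some 0%N).

Fixpoint pre (R : comRingType) (a : ntilde) (H : series R) (m : seq ntilde) : R :=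
  match m with
  | [::] => 0
  | e :: m' => (e == S0)%:R * pre a H m' + (e == a)%:R * H m'
  end.

Lemma addnt_S0l b : addnt S0 b = b.
Proof. by case: b => [[|n]|]. Qed.
Lemma addnt_S0r a : addnt a S0 = a.
Proof. by case: a => [[|n]|] //=; rewrite addn0. Qed.

Lemma cands_uniq e : uniq (cands e).
Proof.
rewrite /cands cons_uniq map_inj_uniq ?iota_uniq ?andbT; last by move=> x y [].
by apply/negP => /mapP [x _].
Qed.

Lemma mem_cands x y e : addnt x y = e -> (x \in cands e) && (y \in cands e).
Proof.
have H : forall n k, (k <= n)%N -> Some k \in cands (Some n).
  move=> n k kn; rewrite /cands in_cons mem_map; last by move=> ? ? [].
  by rewrite mem_iota /= add0n ltnS kn.
case: x => [x|]; case: y => [y|] <- /=.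
- by case: x => [|x] /=; rewrite !H ?leq_addr ?leq_addl.
- by case: x => [|x] //=; rewrite H // inE.
- by case: y => [|y] //=; rewrite H.
- by rewrite inE.
Qed.

Lemma sum_eq1 (R : comRingType) (T : eqType) (s : seq T) x0 (F : T -> R) :
  uniq s -> \sum_(x <- s) (x == x0)%:R * F x = (x0 \in s)%:R * F x0.
Proof.
elim: s => [|y s IH] /=; first by rewrite big_nil mul0r.
case/andP=> ys us; rewrite big_cons IH // inE.
have [<-|ne] := eqVneq y x0; last by rewrite mul0r add0r.
by rewrite (negbTE ys) mul0r addr0 /= mul1r.
Qed.

Lemma sum_decomp_e (R : comRingType) e (F : ntilde * ntilde -> R) :
  \sum_(pq <- decomp_e e) F pq =
  \sum_(x <- cands e) \sum_(y <- cands e) (addnt x y == e)%:R * F (x, y).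
Proof.
rewrite /decomp_e big_filter big_mkcond big_allpairs_dep /=.
by apply: eq_bigr => x _; apply: eq_bigr => y _; case: eqP; rewrite ?mul1r ?mul0r.
Qed.

Lemma dsel (R : comRingType) e x1 y1 :
  \sum_(pq <- decomp_e e) (pq.1 == x1)%:R * (pq.2 == y1)%:R = (addnt x1 y1 == e)%:R :> R.
Proof.
rewrite sum_decomp_e.
rewrite (eq_bigr (fun x => (x == x1)%:R * \sum_(y <- cands e) (y == y1)%:R * (addnt x y == e)%:R)); last first.
  move=> x _; rewrite mulr_sumr; apply: eq_bigr => y _ /=.
  by rewrite mulrC -mulrA.
rewrite sum_eq1 ?cands_uniq // sum_eq1 ?cands_uniq //.
case: eqP => [/mem_cands /andP [-> ->]|]; first by rewrite !mul1r.
by rewrite !mulr0.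
Qed.

Lemma mulser_cons (R : comRingType) (F G : series R) e m :
  mulser F G (e :: m) = \sum_(pq <- decomp_e e) \sum_(r <- decomp m)
     F (pq.1 :: r.1) * G (pq.2 :: r.2).
Proof. by rewrite /mulser /= big_allpairs_dep. Qed.

Lemma S0_cands e : S0 \in cands e.
Proof. by case/andP: (mem_cands (addnt_S0l e)). Qed.
Lemma self_cands e : e \in cands e.
Proof. by case/andP: (mem_cands (addnt_S0l e)). Qed.

Lemma dsel1 (R : comRingType) e (f : ntilde -> R) :
  \sum_(pq <- decomp_e e) (pq.1 == S0)%:R * f pq.2 = f e.
Proof.
rewrite sum_decomp_e.
rewrite (eq_bigr (fun x => (x == S0)%:R * \sum_(y <- cands e) (addnt x y == e)%:R * f y)); last first.
  move=> x _; rewrite mulr_sumr; apply: eq_bigr => y _ /=; ring.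
rewrite sum_eq1 ?cands_uniq // S0_cands mul1r.
under eq_bigr => y _ do rewrite addnt_S0l.
by rewrite sum_eq1 ?cands_uniq // self_cands mul1r.
Qed.

Lemma dsel2 (R : comRingType) e (f : ntilde -> R) :
  \sum_(pq <- decomp_e e) (pq.2 == S0)%:R * f pq.1 = f e.
Proof.
rewrite sum_decomp_e exchange_big /=.
rewrite (eq_bigr (fun y => (y == S0)%:R * \sum_(x <- cands e) (addnt x y == e)%:R * f x)); last first.
  move=> y _; rewrite mulr_sumr; apply: eq_bigr => x _ /=; ring.
rewrite sum_eq1 ?cands_uniq // S0_cands mul1r.
under eq_bigr => y _ do rewrite addnt_S0r.
by rewrite sum_eq1 ?cands_uniq // self_cands mul1r.
Qed.

Lemma Mser_nil_cons (R : comRingType) x p :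
  Mser R [::] (x :: p) = (x == S0)%:R * Mser R [::] p.
Proof. by rewrite /Mser /=; case: (x =P S0) => [->|/eqP ne]; rewrite ?mul1r ?ne ?mul0r. Qed.

Lemma mulser1l (R : comRingType) m (G : series R) : mulser (Mser R [::]) G m = G m.
Proof.
elim: m G => [|e m IH] G.
  by rewrite /mulser /= big_cons big_nil addr0 /Mser /= mul1r.
rewrite mulser_cons.
rewrite (eq_bigr (fun pq => (pq.1 == S0)%:R *
   \sum_(r <- decomp m) Mser R [::] r.1 * G (pq.2 :: r.2))); last first.
  move=> pq _; rewrite mulr_sumr; apply: eq_bigr => r _; rewrite Mser_nil_cons; ring.
by rewrite (@dsel1 R e (fun y => \sum_(r <- decomp m) Mser R [::] r.1 * G (y :: r.2)))
  -/(mulser (Mser R [::]) (fun q => G (e :: q)) m) IH.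
Qed.

Lemma mulser1r (R : comRingType) m (G : series R) : mulser G (Mser R [::]) m = G m.
Proof.
elim: m G => [|e m IH] G.
  by rewrite /mulser /= big_cons big_nil addr0 /Mser /= mulr1.
rewrite mulser_cons.
rewrite (eq_bigr (fun pq => (pq.2 == S0)%:R *
   \sum_(r <- decomp m) G (pq.1 :: r.1) * Mser R [::] r.2)); last first.
  move=> pq _; rewrite mulr_sumr; apply: eq_bigr => r _; rewrite Mser_nil_cons; ring.
by rewrite (@dsel2 R e (fun y => \sum_(r <- decomp m) G (y :: r.1) * Mser R [::] r.2))
  -/(mulser (fun q => G (e :: q)) (Mser R [::]) m) IH.
Qed.

Lemma mulser_pre (R : comRingType) a b (F G : series R) m :
  mulser (pre a F) (pre b G) m =
  pre a (mulser F (pre b G)) m + pre b (mulser (pre a F) G) m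
  + pre (addnt a b) (mulser F G) m.
Proof.
elim: m => [|e m IH].
  by rewrite /mulser /= big_cons big_nil /= !mulr0 !addr0.
rewrite mulser_cons.
have E : forall pq : ntilde * ntilde,
  \sum_(r <- decomp m) pre a F (pq.1 :: r.1) * pre b G (pq.2 :: r.2) =
  (pq.1 == S0)%:R * (pq.2 == S0)%:R * mulser (pre a F) (pre b G) m
  + (pq.1 == S0)%:R * (pq.2 == b)%:R * mulser (pre a F) G m
  + (pq.1 == a)%:R * (pq.2 == S0)%:R * mulser F (pre b G) m
  + (pq.1 == a)%:R * (pq.2 == b)%:R * mulser F G m.
  move=> pq; rewrite /mulser !mulr_sumr -!big_split; apply: eq_bigr => r _ /=; ring.
rewrite (eq_bigr _ (fun pq _ => E pq)) !big_split /= -!mulr_suml !dsel.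
rewrite !addnt_S0l !addnt_S0r IH /= !(eq_sym _ e); ring.
Qed.

Definition pfx (R : Type) (a : ntilde) (x : comb R) : comb R :=
  [seq (p.1, a :: p.2) | p <- x].
Definition scalec (R : comRingType) (k : R) (x : comb R) : comb R :=
  [seq (k * p.1, p.2) | p <- x].

Lemma pre_add (R : comRingType) a (F G : series R) m :
  pre a (fun m => F m + G m) m = pre a F m + pre a G m.
Proof. by elim: m => [|e m IH] /=; rewrite ?addr0 // IH; ring. Qed.
Lemma pre_scale (R : comRingType) a k (F : series R) m :
  pre a (fun m => k * F m) m = k * pre a F m.
Proof. by elim: m => [|e m IH] /=; rewrite ?mulr0 // IH; ring. Qed.
Lemma pre0 (R : comRingType) a m : pre a (fun _ => 0 : R) m = 0.
Proof. by elim: m => [|e m IH] //=; rewrite IH; ring. Qed.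
Lemma pre_opp (R : comRingType) a (F : series R) m :
  pre a (fun m => - F m) m = - pre a F m.
Proof. by elim: m => [|e m IH] /=; rewrite ?oppr0 // IH; ring. Qed.

Lemma Mser_cons (R : comRingType) a w m : a != S0 ->
  Mser R (a :: w) m = pre a (Mser R w) m.
Proof.
move=> aS; elim: m => [|e m IH] /=; first by rewrite /Mser.
rewrite -IH /Mser /=.
have [->|eS] := eqVneq e S0.
  by rewrite (eq_sym S0 a) (negbTE aS) mul0r addr0 mul1r.
by rewrite mul0r add0r /= eqseq_cons; case: (e == a); rewrite /= ?mul1r ?mul0r.
Qed.

Lemma Mser_consE (R : comRingType) a w : a != S0 ->
  Mser R (a :: w) = pre a (Mser R w).
Proof. by move=> aS; apply: functional_extensionality => m; apply: Mser_cons. Qed.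

Lemma ser_nil (R : comRingType) m : ser ([::] : comb R) m = 0.
Proof. by rewrite /ser big_nil. Qed.
Lemma ser_cons (R : comRingType) p (x : comb R) m :
  ser (p :: x) m = p.1 * Mser R p.2 m + ser x m.
Proof. by rewrite /ser big_cons. Qed.
Lemma ser_cat (R : comRingType) (x y : comb R) m : ser (x ++ y) m = ser x m + ser y m.
Proof. by rewrite /ser big_cat. Qed.
Lemma ser_scale (R : comRingType) k (x : comb R) m : ser (scalec k x) m = k * ser x m.
Proof. by rewrite /ser big_map mulr_sumr; apply: eq_bigr => p _; rewrite mulrA. Qed.

Lemma ser_prefix (R : comRingType) a (x : comb R) m : a != S0 ->
  ser (pfx a x) m = pre a (ser x) m.
Proof.
move=> aS; elim: x m => [|p x IH] m.
  by rewrite ser_nil -(@pre0 R a m); congr pre; apply: functional_extensionality => n; rewrite ser_nil.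
rewrite /= ser_cons IH /= Mser_cons //.
have -> : ser (p :: x) = (fun m => p.1 * Mser R p.2 m + ser x m).
  by apply: functional_extensionality => n; rewrite ser_cons.
by rewrite pre_add pre_scale.
Qed.

Lemma mulser_suml (R : comRingType) (I : Type) (s : seq I) (f : I -> series R) (H : series R) m :
  mulser (fun m => \sum_(i <- s) f i m) H m = \sum_(i <- s) mulser (f i) H m.
Proof.
rewrite /mulser; under eq_bigr => r _ do rewrite mulr_suml.
by rewrite exchange_big.
Qed.

Lemma mulser_scalel (R : comRingType) k (F H : series R) m :
  mulser (fun m => k * F m) H m = k * mulser F H m.
Proof. by rewrite /mulser mulr_sumr; apply: eq_bigr => r _; rewrite mulrA. Qed.

Lemma mulser_ser (R : comRingType) (x : comb R) (H : series R) m :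
  mulser (ser x) H m = \sum_(p <- x) p.1 * mulser (Mser R p.2) H m.
Proof.
rewrite /ser mulser_suml; apply: eq_bigr => p _; exact: mulser_scalel.
Qed.

Lemma addnt_neq0 a b : a != S0 -> b != S0 -> addnt a b != S0.
Proof. by case: a => [[|x]|]; case: b => [[|y]|]. Qed.

Lemma is_comb_cat (R : Type) (x y : comb R) : is_comb (x ++ y) = is_comb x && is_comb y.
Proof. by rewrite /is_comb all_cat. Qed.
Lemma is_comb_prefix (R : Type) a (x : comb R) :
  a != S0 -> is_comb x -> is_comb (pfx a x).
Proof. by move=> aS; rewrite /is_comb all_map; apply: sub_all => p /= ->; rewrite andbT. Qed.
Lemma is_comb_scale (R : comRingType) k (x : comb R) : is_comb (scalec k x) = is_comb x.
Proof. by rewrite /is_comb all_map. Qed.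

Lemma prod_comb (R : comRingType) n d g :
  (size d + size g <= n)%N -> is_comp d -> is_comp g ->
  exists x : comb R, is_comb x /\ forall m, mulser (Mser R d) (Mser R g) m = ser x m.
Proof.
elim: n d g => [|n IH] d g.
  case: d => //; case: g => // _ _ _; exists [:: (1, [::])]; split => // m.
  by rewrite mulser1l ser_cons ser_nil mul1r addr0.
case: d => [|a d]; first by move=> _ _ cg; exists [:: (1, g)]; split;
  [rewrite /is_comb all_seq1 | move=> m; rewrite mulser1l ser_cons ser_nil mul1r addr0].
case: g => [|b g]; first by move=> _ cd _; exists [:: (1, a :: d)]; split;
  [rewrite /is_comb all_seq1 | move=> m; rewrite mulser1r ser_cons ser_nil mul1r addr0].
rewrite /= addnS addSn ltnS => sz /andP [aS cd] /andP [bS cg].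
have [x1 [c1 e1]] : exists x : comb R, is_comb x /\ forall m, mulser (Mser R d) (Mser R (b :: g)) m = ser x m.
  by apply: IH => //; rewrite /= ?addnS ?addSn // /is_comp /= ?aS ?bS.
have [x2 [c2 e2]] : exists x : comb R, is_comb x /\ forall m, mulser (Mser R (a :: d)) (Mser R g) m = ser x m.
  by apply: IH => //; rewrite /= ?addnS ?addSn // /is_comp /= ?aS ?bS.
have [x3 [c3 e3]] : exists x : comb R, is_comb x /\ forall m, mulser (Mser R d) (Mser R g) m = ser x m.
  by apply: IH => //; rewrite ltnW.
exists (pfx a x1 ++ pfx b x2 ++ pfx (addnt a b) x3); split.
  by rewrite !is_comb_cat !is_comb_prefix ?addnt_neq0.
move=> m; rewrite !ser_cat !ser_prefix ?addnt_neq0 //.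
rewrite (Mser_consE _ _ aS) (Mser_consE _ _ bS) mulser_pre.
rewrite -(Mser_consE _ _ aS) -(Mser_consE _ _ bS).
have -> : mulser (Mser R d) (Mser R (b :: g)) = ser x1 by apply: functional_extensionality.
have -> : mulser (Mser R (a :: d)) (Mser R g) = ser x2 by apply: functional_extensionality.
have -> : mulser (Mser R d) (Mser R g) = ser x3 by apply: functional_extensionality.
by rewrite addrA.
Qed.

Definition addS (R : comRingType) (F G : series R) : series R := fun m => F m + G m.

Lemma pre_addS (R : comRingType) a (F G : series R) :
  pre a (addS F G) = addS (pre a F) (pre a G).
Proof. by apply: functional_extensionality => m; rewrite /addS pre_add. Qed.

Fixpoint Yf (R : comRingType) (s v : seq ntilde) : series R :=
  match s with
  | [::] => fun _ => 0
  | a :: s' => pre a (addS (addS (Yf R s' v) (pre None (mulser (Mser R s') (Mser R v))))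
                            (mulser (Mser R s') (Mser R v)))
  end.

Lemma addnt_None a : a != S0 -> addnt a None = a.
Proof. by case: a => [[|x]|]. Qed.

Lemma NoneS0 : None != S0. Proof. by []. Qed.

Lemma Ydecomp (R : comRingType) s v m : is_comp s ->
  mulser (Mser R s) (Mser R (None :: v)) m =
  pre None (mulser (Mser R s) (Mser R v)) m + Yf R s v m.
Proof.
elim: s m => [|a s IH] m.
  by move=> _; rewrite mulser1l Mser_cons // addr0; congr pre;
     apply: functional_extensionality => n; rewrite mulser1l.
case/andP => aS cs.
rewrite (Mser_consE _ _ aS) (Mser_consE _ _ NoneS0) mulser_pre addnt_None //.
rewrite -(Mser_consE _ _ aS) -(Mser_consE _ _ NoneS0).
have -> : mulser (Mser R s) (Mser R (None :: v)) =
   addS (pre None (mulser (Mser R s) (Mser R v))) (Yf R s v).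
  by apply: functional_extensionality => n; rewrite IH.
rewrite /= !pre_addS /addS; ring.
Qed.

Definition psi (R : comRingType) (c : comb R) : comb R :=
  [seq (p.1 * (-1) ^+ leps p.2, bar p.2) | p <- c].

Lemma psi_cat (R : comRingType) (x y : comb R) : psi (x ++ y) = psi x ++ psi y.
Proof. by rewrite /psi map_cat. Qed.
Lemma phi_cat (R : comRingType) (x y : comb R) : phi (x ++ y) = phi x ++ phi y.
Proof. by rewrite /phi filter_cat map_cat. Qed.
Lemma phi_scale (R : comRingType) k (x : comb R) : phi (scalec k x) = scalec k (phi x).
Proof. by elim: x => [|p x IH] //=; rewrite /phi /= in IH *; case: ifP => _ //=; rewrite IH mulrA. Qed.
Lemma phi_prefixNone (R : comRingType) (x : comb R) : phi (pfx None x) = [::].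
Proof. by elim: x. Qed.

Lemma phi_prefix (R : comRingType) a (x : comb R) : a != None ->
  phi (pfx a x) = psi (pfx a x).
Proof.
move=> aN; rewrite /phi /psi; congr map; apply/all_filterP.
by rewrite /pfx all_map; apply/allP => p _ /=.
Qed.

Lemma psi_prefixNone (R : comRingType) (x : comb R) :
  psi (pfx None x) = scalec (-1) (psi x).
Proof.
rewrite /psi /pfx /scalec -!map_comp; apply: eq_map => p /=.
by rewrite /leps /= exprS; congr pair; ring.
Qed.

Lemma psi_prefix (R : comRingType) a (x : comb R) : a != None ->
  psi (pfx a x) = pfx a (psi x).
Proof.
move=> aN; rewrite /psi /pfx -!map_comp; apply: eq_map => p /=.
by rewrite /leps /bar /= (negbTE aN).
Qed.

Lemma ser0_ext (R : comRingType) (x : comb R) : (forall m, ser x m = 0) -> ser x = fun _ => 0.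
Proof. by move=> h; apply: functional_extensionality. Qed.

Lemma psi_prefix0 (R : comRingType) a (x : comb R) : a != S0 ->
  (forall m, ser (psi x) m = 0) -> forall m, ser (psi (pfx a x)) m = 0.
Proof.
move=> aS h m; have [->|aN] := eqVneq a None.
  by rewrite psi_prefixNone ser_scale h mulr0.
by rewrite psi_prefix // ser_prefix // (ser0_ext h) pre0.
Qed.

Lemma Yf_comb (R : comRingType) s v : is_comp s -> is_comp v ->
  exists e : comb R, [/\ is_comb e, (forall m, ser e m = Yf R s v m),
    (forall m, ser (psi e) m = 0) & (forall m, ser (phi e) m = 0)].
Proof.
move=> + cv; elim: s => [|a s IH].
  by move=> _; exists [::]; split => // m; rewrite ser_nil.
case/andP => aS cs; have [e [ce se pe _]] := IH cs.
have [z [cz sz]] := @prod_comb R _ s v (leqnn _) cs cv.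
set x := e ++ pfx None z ++ z.
have psx : forall m, ser (psi x) m = 0.
  move=> m; rewrite !psi_cat !ser_cat psi_prefixNone ser_scale pe; ring.
exists (pfx a x); split.
- by rewrite is_comb_prefix // !is_comb_cat ce cz is_comb_prefix.
- move=> m; rewrite ser_prefix //=; congr pre.
  apply: functional_extensionality => n; rewrite !ser_cat ser_prefix // /addS se.
  have -> : mulser (Mser R s) (Mser R v) = ser z by apply: functional_extensionality.
  by rewrite addrA.
- exact: psi_prefix0.
- move=> m; have [->|aN] := eqVneq a None; first by rewrite phi_prefixNone ser_nil.
  by rewrite phi_prefix //; apply: psi_prefix0.
Qed.

Lemma prod_eps_comb (R : comRingType) d v : is_comp d -> is_comp v ->
  exists e : comb R, [/\ is_comb e,
    (forall m, ser e m = mulser (Mser R d) (Mser R (None :: v)) m)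
    & (forall m, ser (phi e) m = 0)].
Proof.
move=> cd cv; have [y [cy sy _ py]] := @Yf_comb R d v cd cv.
have [z [cz sz]] := @prod_comb R _ d v (leqnn _) cd cv.
exists (pfx None z ++ y); split.
- by rewrite is_comb_cat cy is_comb_prefix.
- move=> m; rewrite Ydecomp // ser_cat sy ser_prefix //; congr (pre _ _ _ + _).
  by apply: functional_extensionality => n.
- by move=> m; rewrite phi_cat phi_prefixNone /= py.
Qed.

Definition gphi (R : comRingType) (m al : seq ntilde) : R :=
  (~~ in_Ceps al)%:R * ((-1) ^+ leps al * Mser R (bar al) m).

Lemma ser_phi (R : comRingType) (c : comb R) m :
  ser (phi c) m = \sum_(p <- c) p.1 * gphi R m p.2.
Proof.
elim: c => [|p c IH]; first by rewrite /phi /= ser_nil big_nil.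
rewrite big_cons -IH /phi /gphi /=; case: ifP => _ /=.
  by rewrite ser_cons mul1r mulrA.
by rewrite mul0r mulr0 add0r.
Qed.

Lemma Mser_comp (R : comRingType) w al : is_comp al -> Mser R w al = (w == al)%:R.
Proof. by move=> /all_filterP h; rewrite /Mser h eq_sym; case: eqP. Qed.

Lemma ser_coef (R : comRingType) (c : comb R) al : is_comp al ->
  ser c al = \sum_(p <- c) p.1 * (p.2 == al)%:R.
Proof. by move=> h; rewrite /ser; apply: eq_bigr => p _; rewrite Mser_comp. Qed.

Lemma ser_phi_U (R : comRingType) (c : comb R) (U : seq (seq ntilde)) m :
  uniq U -> {subset [seq p.2 | p <- c] <= U} -> all is_comp U ->
  ser (phi c) m = \sum_(al <- U) gphi R m al * ser c al.
Proof.
move=> uU sU aU.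
transitivity (\sum_(al <- U) gphi R m al * \sum_(p <- c) p.1 * (p.2 == al)%:R).
  rewrite ser_phi.
  rewrite (eq_big_seq (fun p => \sum_(al <- U) (al == p.2)%:R * (p.1 * gphi R m al))); last first.
    by move=> p pc; rewrite sum_eq1 // (sU _ (map_f _ pc)) mul1r.
  rewrite exchange_big /=; apply: eq_bigr => al _; rewrite mulr_sumr.
  by apply: eq_bigr => p _; rewrite eq_sym; ring.
apply: eq_big_seq => al alU; rewrite ser_coef //; exact: (allP aU).
Qed.

Lemma phi_congr (R : comRingType) (c d : comb R) :
  is_comb c -> is_comb d -> (forall m, ser c m = ser d m) ->
  forall m, ser (phi c) m = ser (phi d) m.
Proof.
move=> cc cd e m; set U := undup [seq p.2 | p <- c ++ d].
have aU : all is_comp U.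
  apply/allP => al; rewrite mem_undup => /mapP [p]; rewrite mem_cat => /orP [] pc ->.
    exact: (allP cc).
  exact: (allP cd).
rewrite (@ser_phi_U _ c U) ?undup_uniq //; last first.
  by move=> al /mapP [p pc ->]; rewrite mem_undup map_f // mem_cat pc.
rewrite (@ser_phi_U _ d U) ?undup_uniq //; last first.
  by move=> al /mapP [p pc ->]; rewrite mem_undup map_f // mem_cat pc orbT.
by apply: eq_bigr => al _; rewrite e.
Qed.

Definition validq (R : comRingType) (q : comb R * seq ntilde) :=
  is_comb q.1 && is_comp q.2 && in_Ceps q.2.

Lemma one_comb (R : comRingType) (x : comb R) w : is_comb x -> is_comp w -> in_Ceps w ->
  exists d : comb R, [/\ is_comb d,
    (forall m, ser d m = mulser (ser x) (Mser R w) m)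
    & (forall m, ser (phi d) m = 0)].
Proof.
case: w => [|e v] // cx /andP [_ cv] /eqP -> {e}.
elim: x cx => [|p x IH].
  by move=> _; exists [::]; split => // m; rewrite /= ?ser_nil ?mulser_ser ?big_nil.
case/andP => cp cx; have [d [cd sd pd]] := IH cx.
have [e [ce se pe]] := @prod_eps_comb R p.2 v cp cv.
exists (scalec p.1 e ++ d); split.
- by rewrite is_comb_cat is_comb_scale ce cd.
- by move=> m; rewrite ser_cat ser_scale se sd !mulser_ser big_cons.
- by move=> m; rewrite phi_cat ser_cat phi_scale ser_scale pe pd mulr0 addr0.
Qed.

Lemma ideal_comb (R : comRingType) (gs : seq (comb R * seq ntilde)) :
  all (@validq R) gs ->
  exists d : comb R, [/\ is_comb d,
    (forall m, ser d m = \sum_(q <- gs) mulser (ser q.1) (Mser R q.2) m)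
    & (forall m, ser (phi d) m = 0)].
Proof.
elim: gs => [|q gs IH].
  by move=> _; exists [::]; split => // m; rewrite /= ?ser_nil ?big_nil.
case/andP => /andP [/andP [c1 c2] c3] /IH [d [cd sd pd]].
have [e [ce se pe]] := one_comb c1 c2 c3.
exists (e ++ d); split.
- by rewrite is_comb_cat ce cd.
- by move=> m; rewrite ser_cat se sd big_cons.
- by move=> m; rewrite phi_cat ser_cat pe pd addr0.
Qed.

Lemma dir_left (R : comRingType) (c : comb R) gs : is_comb c ->
  all (@validq R) gs ->
  (forall m, ser c m = \sum_(q <- gs) mulser (ser q.1) (Mser R q.2) m) ->
  forall m, ser (phi c) m = 0.
Proof.
move=> cc /ideal_comb [d [cd sd pd]] e m.
rewrite (phi_congr cc cd) // => n; by rewrite e sd.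
Qed.

Definition inI (R : comRingType) (H : series R) :=
  exists gs : seq (comb R * seq ntilde), all (@validq R) gs /\
    forall m, H m = \sum_(q <- gs) mulser (ser q.1) (Mser R q.2) m.

Lemma inI_ext (R : comRingType) (H H' : series R) :
  inI H -> (forall m, H m = H' m) -> inI H'.
Proof. by move=> [gs [v s]] e; exists gs; split => // m; rewrite -e. Qed.

Lemma inI0 (R : comRingType) : inI (fun _ => 0 : R).
Proof. by exists [::]; split => // m; rewrite big_nil. Qed.

Lemma inI_add (R : comRingType) (F G : series R) :
  inI F -> inI G -> inI (fun m => F m + G m).
Proof.
move=> [g1 [v1 s1]] [g2 [v2 s2]]; exists (g1 ++ g2); split.
  by rewrite all_cat v1 v2.
by move=> m; rewrite big_cat s1 s2.
Qed.

Lemma inI_scale (R : comRingType) k (F : series R) :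
  inI F -> inI (fun m => k * F m).
Proof.
move=> [g [v s]]; exists [seq (scalec k q.1, q.2) | q <- g]; split.
  by rewrite all_map; apply: sub_all v => q; rewrite /validq /= is_comb_scale.
move=> m; rewrite s big_map mulr_sumr; apply: eq_bigr => q _ /=.
have -> : ser (scalec k q.1) = (fun m => k * ser q.1 m).
  by apply: functional_extensionality => n; rewrite ser_scale.
by rewrite mulser_scalel.
Qed.

Lemma inI_sub (R : comRingType) (F G : series R) :
  inI F -> inI G -> inI (fun m => F m - G m).
Proof.
move=> hF hG; move/inI_ext: (inI_add hF (inI_scale (-1) hG)); apply => m; ring.
Qed.

Lemma inI_prod (R : comRingType) s w : is_comp s -> is_comp w -> in_Ceps w ->
  inI (mulser (Mser R s) (Mser R w)).
Proof.
move=> cs cw ew; exists [:: ([:: (1, s)], w)]; split.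
  by rewrite /= andbT /validq /= /is_comb /= cs cw ew.
move=> m; rewrite big_cons big_nil addr0 /=.
have -> : ser [:: (1, s)] = Mser R s.
  by apply: functional_extensionality => n; rewrite ser_cons ser_nil mul1r addr0.
by [].
Qed.

Lemma inI_M (R : comRingType) w : is_comp w -> in_Ceps w -> inI (Mser R w).
Proof.
move=> cw ew; move/inI_ext: (@inI_prod R [::] w erefl cw ew); apply => m.
exact: mulser1l.
Qed.

Lemma inI_sumz (R : comRingType) (z : comb R) (f : R * seq ntilde -> series R) :
  (forall p, p \in z -> inI (f p)) -> inI (fun m => \sum_(p <- z) p.1 * f p m).
Proof.
elim: z => [|p z IH] h.
  by move/inI_ext: (@inI0 R); apply => m; rewrite big_nil.
have h' : forall q, q \in z -> inI (f q) by move=> q qz; apply: h; rewrite inE qz orbT.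
move/inI_ext: (inI_add (inI_scale p.1 (h p (mem_head _ _))) (IH h')); apply.
by move=> m; rewrite big_cons.
Qed.

Fixpoint prel (R : comRingType) (r : seq ntilde) (H : series R) : series R :=
  match r with [::] => H | a :: r' => pre a (prel r' H) end.

Lemma prel_cat (R : comRingType) r1 r2 (H : series R) :
  prel (r1 ++ r2) H = prel r1 (prel r2 H).
Proof. by elim: r1 => //= a r1 ->. Qed.

Lemma prel_addS (R : comRingType) r (F G : series R) :
  prel r (addS F G) = addS (prel r F) (prel r G).
Proof. by elim: r => //= a r ->; rewrite pre_addS. Qed.

Lemma prel0 (R : comRingType) r : prel r (fun _ => 0 : R) = fun _ => 0.
Proof.
elim: r => //= a r ->; apply: functional_extensionality => m; exact: pre0.
Qed.

Definition prefixl (R : Type) (r : seq ntilde) (x : comb R) : comb R :=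
  [seq (p.1, r ++ p.2) | p <- x].

Lemma prel_ser (R : comRingType) r (x : comb R) : is_comp r ->
  prel r (ser x) = ser (prefixl r x).
Proof.
elim: r => [|a r IH] /=.
  by move=> _; congr ser; rewrite /prefixl map_id_in //; case.
case/andP => aS cr; rewrite IH //; apply: functional_extensionality => m.
rewrite -ser_prefix //; congr ser; by rewrite /pfx /prefixl -map_comp.
Qed.

Lemma prel_Mser (R : comRingType) r w : is_comp r ->
  prel r (Mser R w) = Mser R (r ++ w).
Proof.
elim: r => //= a r IH /andP [aS cr]; rewrite IH // Mser_consE //.
Qed.

Definition Kp (R : comRingType) (w : seq ntilde) :=
  forall v, is_comp v -> inI (fun m => Mser R (w ++ None :: v) m + Mser R (w ++ v) m).

Lemma Zpart (R : comRingType) r t v : is_comp r -> Kp R r -> is_comp t -> is_comp v ->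
  inI (addS (prel r (pre None (mulser (Mser R t) (Mser R v))))
            (prel r (mulser (Mser R t) (Mser R v)))).
Proof.
move=> cr K ct cv.
have [z [cz sz]] := @prod_comb R _ t v (leqnn _) ct cv.
have -> : mulser (Mser R t) (Mser R v) = ser z by apply: functional_extensionality.
have -> : pre None (ser z) = ser (pfx None z).
  by apply: functional_extensionality => m; rewrite ser_prefix.
rewrite !prel_ser //.
have hz : forall p, p \in z -> inI (fun m => Mser R (r ++ None :: p.2) m + Mser R (r ++ p.2) m).
  move=> p pz; apply: K; exact: (allP cz).
move/inI_ext: (inI_sumz hz); apply.
  move=> m; rewrite /addS /ser /prefixl /pfx !big_map -big_split.
  by apply: eq_bigr => p _ /=; ring.
Qed.

Lemma is_comp_cat (x y : seq ntilde) : is_comp (x ++ y) = is_comp x && is_comp y.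
Proof. by rewrite /is_comp all_cat. Qed.

Lemma Lp (R : comRingType) v : is_comp v -> forall t, t != [::] -> is_comp t ->
  forall r, is_comp r -> (forall i, (0 < i < size t)%N -> Kp R (r ++ take i t)) ->
  inI (fun m => prel r (Yf R t v) m -
        (Mser R (r ++ t ++ None :: v) m + Mser R (r ++ t ++ v) m)).
Proof.
move=> cv; elim=> [//|a t IH] _ ca r cr HK.
have /andP [aS ct] : (a != S0) && is_comp t := ca.
have cra : is_comp (r ++ [:: a]) by rewrite is_comp_cat cr /is_comp /= aS.
have e1 : prel r (Yf R (a :: t) v) =
   prel (r ++ [:: a]) (addS (addS (Yf R t v) (pre None (mulser (Mser R t) (Mser R v))))
                            (mulser (Mser R t) (Mser R v))).
  by rewrite prel_cat.
rewrite e1 !prel_addS.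
have [->|tn] := eqVneq t [::].
  rewrite /= prel0.
  have -> : mulser (Mser R [::]) (Mser R v) = Mser R v.
    by apply: functional_extensionality => m; rewrite mulser1l.
  rewrite -Mser_consE // !prel_Mser //.
  move/inI_ext: (@inI0 R); apply => m; rewrite /addS -!catA /=; ring.
have K1 : Kp R (r ++ [:: a]).
  by have := HK 1%N; rewrite /= take0 ltnS lt0n size_eq0 tn; apply.
have HK' : forall i, (0 < i < size t)%N -> Kp R ((r ++ [:: a]) ++ take i t).
  move=> i /andP [i0 it]; have := HK i.+1; rewrite /= -catA /=; apply.
  by rewrite ltnS it.
move/inI_ext: (inI_add (IH tn ct _ cra HK') (Zpart cra K1 ct cv)); apply => m.
rewrite /addS -!catA /=; ring.
Qed.

Lemma is_comp_take i s : is_comp s -> is_comp (take i s).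
Proof. by rewrite -{1}(cat_take_drop i s) is_comp_cat => /andP []. Qed.

Lemma inI_preNone (R : comRingType) s v : is_comp s -> is_comp v ->
  inI (pre None (mulser (Mser R s) (Mser R v))).
Proof.
move=> cs cv; have [z [cz sz]] := @prod_comb R _ s v (leqnn _) cs cv.
have -> : mulser (Mser R s) (Mser R v) = ser z by apply: functional_extensionality.
have hz : forall p, p \in z -> inI (Mser R (None :: p.2)).
  by move=> p pz; apply: inI_M => //; exact: (allP cz p pz).
move/inI_ext: (inI_sumz hz); apply => m.
rewrite -ser_prefix // /ser /pfx big_map; apply: eq_bigr => p _ /=.
by [].
Qed.

Lemma Kall (R : comRingType) n s : (size s <= n)%N -> s != [::] -> is_comp s -> Kp R s.
Proof.
elim: n s => [|n IH] s.
  by rewrite leqn0 size_eq0 => ->.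
move=> sz sn cs v cv.
have HK : forall i, (0 < i < size s)%N -> Kp R ([::] ++ take i s).
  move=> i /andP [i0 iz]; apply: IH; rewrite ?is_comp_take //.
  - by rewrite size_take iz; rewrite -ltnS (leq_trans iz sz).
  - by rewrite -size_eq0 size_take iz -lt0n.
have L := Lp cv sn cs (erefl : is_comp [::]) HK.
have cNv : is_comp (None :: v) by rewrite /is_comp /=.
have P := inI_prod R cs cNv (erefl _).
move/inI_ext: (inI_sub (inI_sub P (inI_preNone R cs cv)) L); apply => m.
rewrite Ydecomp //=; ring.
Qed.

Lemma in_Ceps_cat (s x : seq ntilde) : s != [::] -> in_Ceps (s ++ x) = in_Ceps s.
Proof. by case: s. Qed.

Lemma Eall (R : comRingType) n al : (size al <= n)%N -> is_comp al -> ~~ in_Ceps al ->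
  inI (fun m => Mser R al m - (-1) ^+ leps al * Mser R (bar al) m).
Proof.
elim: n al => [|n IH] al.
  rewrite leqn0 size_eq0 => /eqP -> _ _ /=.
  by move/inI_ext: (@inI0 R); apply => m; rewrite /leps /bar /= expr0 mul1r subrr.
move=> sz ca nc.
have [Nin|Nal] := boolP (None \in al); last first.
  have e1 : leps al = 0%N by apply/count_memPn.
  have e2 : bar al = al.
    by apply/all_filterP/allP => x xa; apply: contraNneq Nal => <-.
  by move/inI_ext: (@inI0 R); apply => m; rewrite e1 e2 expr0 mul1r subrr.
set i := index None al.
have iS : (i < size al)%N by rewrite index_mem.
have ea : al = take i al ++ None :: drop i.+1 al.
  by rewrite -{1}(cat_take_drop i al) (drop_nth None iS) nth_index.
set s := take i al; set w := drop i.+1 al.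
have i0 : (0 < i)%N.
  rewrite lt0n; apply/negP => /eqP i0; move: nc; rewrite ea -/s -/w.
  by rewrite /s i0 take0.
have sn : s != [::] by rewrite -size_eq0 size_take iS -lt0n.
have csw : is_comp s && is_comp w.
  by move: ca; rewrite {1}ea is_comp_cat => /andP [-> cw2]; exact: cw2.
case/andP: csw => cs cw.
have K := @Kall R _ _ (leqnn _) sn cs _ cw.
have nc' : ~~ in_Ceps (s ++ w).
  have -> : in_Ceps (s ++ w) = in_Ceps (s ++ None :: w) by rewrite !in_Ceps_cat.
  by rewrite -ea.
have szw : (size (s ++ w) <= n)%N.
  move: sz; rewrite {1}ea !size_cat /= addnS ltnS //.
have E := IH _ szw (etrans (is_comp_cat _ _) (introT andP (conj cs cw))) nc'.
have el : leps (s ++ None :: w) = (leps (s ++ w)).+1.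
  by rewrite /leps !count_cat /= addnS.
have eb : bar (s ++ None :: w) = bar (s ++ w).
  by rewrite /bar !filter_cat.
move/inI_ext: (inI_sub K E); apply => m.
rewrite {1 2 3}ea el eb exprS; ring.
Qed.

Lemma phi_cons (R : comRingType) p (c : comb R) :
  phi (p :: c) = if ~~ in_Ceps p.2 then (p.1 * (-1) ^+ leps p.2, bar p.2) :: phi c
                 else phi c.
Proof. by rewrite /phi /=; case: ifP. Qed.

Lemma dir_right (R : comRingType) (c : comb R) : is_comb c ->
  inI (fun m => ser c m - ser (phi c) m).
Proof.
elim: c => [|p c IH].
  by move=> _; move/inI_ext: (@inI0 R); apply => m; rewrite /= !ser_nil subrr.
case/andP => cp cc; have {}IH := IH cc.
rewrite phi_cons; case: ifP => hp.
  have E := @Eall R _ _ (leqnn _) cp hp.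
  move/inI_ext: (inI_add (inI_scale p.1 E) IH); apply => m.
  rewrite !ser_cons /=; ring.
have hp' : in_Ceps p.2 by move/negbFE: hp.
move/inI_ext: (inI_add (inI_scale p.1 (inI_M R cp hp')) IH); apply => m.
rewrite !ser_cons; ring.
Qed.

Unset Implicit Arguments.

Theorem corollary3p12 (R : comAlgType rat) (c : comb R) :
  is_comb c ->
  ((forall m, ser (phi c) m = 0) <->
   exists gs : seq (comb R * seq ntilde),
     all (fun q => is_comb q.1 && is_comp q.2 && in_Ceps q.2) gs /\
     forall m, ser c m = \sum_(q <- gs) mulser (ser q.1) (Mser R q.2) m).
Proof.
move=> cc; split.
  move=> h0; have [gs [vg eg]] := dir_right cc.
  exists gs; split => // m; by rewrite -eg h0 subr0.
by move=> [gs [vg eg]]; apply: (dir_left cc vg eg).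
Qed.
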